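(* Let $n=2$, and let $L\in K[D_1,D_2]$ have order $d$ and symbol $\operatorname{Sym}_L=S_1\cdots S_k$, where $S_1,\dots,S_k\in K[X_1,X_2]$ are pairwise coprime homogeneous polynomials. Then the ring of obstacles $K[X_1,X_2]/I$, where $I=(\operatorname{Sym}_L/S_1,\dots,\operatorname{Sym}_L/S_k)$, is zero in degree $d-1$: every homogeneous polynomial of degree $d-1$ lies in $I$. Consequently every common obstacle to factorization of $L$ of type $(S_1)\cdots(S_k)$ has order at most $d-2$.
   Context: $K$ is a field with commuting derivations $\partial_1,\partial_2$, and $K[D_1,D_2]$ is the ring of linear differential operators over $K$: $D_1D_2=D_2D_1$ and $D_i\circ a=aD_i+\partial_i(a)$ for $a\in K$. Every $L$ is uniquely $\sum a_{ij}D_1^iD_2^j$ with $a_{ij}\in K$. The order $\operatorname{ord}(L)$ is the largest $i+j$ with $a_{ij}\neq0$, and $\operatorname{ord}(0)=-\infty$. The symbol $\operatorname{Sym}_L=\sum_{i+j=\operatorname{ord}L}a_{ij}X_1^iX_2^j$. A factorization of type $(S_1)\cdots(S_k)$ of an operator $M$ is $M=F_1\circ\cdots\circ F_k$ with $\operatorname{Sym}_{F_i}=S_i$. A common obstacle to factorization of $L$ of that type is an operator $R$ such that $L-R$ has such a factorization and $R$ has minimal possible order among such operators. *)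

(* Defs.v *)
From HB Require Import structures.
From mathcomp Require Import all_boot all_order all_algebra.
From mathcomp Require Import mpoly.

Set Implicit Arguments.
Unset Strict Implicit.
Unset Printing Implicit Defensive.

Import Order.TTheory GRing.Theory.
Local Open Scope ring_scope.

Definition i1 : 'I_2 := @ord0 1.
Definition i2 : 'I_2 := @ord_max 1.

Definition is_derivation (K : fieldType) (d : K -> K) : Prop :=
  (forall a b, d (a + b) = d a + d b) /\ (forall a b, d (a * b) = d a * b + a * d b).

(* Linear differential operators L = sum a_ij D1^i D2^j over K are encoded by
   their coefficient data as elements of {mpoly K[2]}: the coefficient of the
   monomial X1^i X2^j is a_ij.  The ring structure of K[D1,D2] is NOT the
   commutative one of {mpoly K[2]}; it is given by [dmul] below. *)

(* Composition of operators:
   (a D1^i D2^j) o (b D1^k D2^l)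
     = sum_{g1<=i, g2<=j} C(i,g1) C(j,g2) a d1^g1 d2^g2 (b) D1^(i-g1+k) D2^(j-g2+l),
   which is the unique product with D1 D2 = D2 D1 and D_s o a = a D_s + d_s(a). *)
Definition dmul (K : fieldType) (d1 d2 : K -> K) (P Q : {mpoly K[2]}) : {mpoly K[2]} :=
  \sum_(m <- msupp P) \sum_(m' <- msupp Q)
   \sum_(g1 < (m i1).+1) \sum_(g2 < (m i2).+1)
     ((('C(m i1, g1) * 'C(m i2, g2))%:R * P@_m * iter g1 d1 (iter g2 d2 Q@_m'))
        *: ('X_i1 ^+ (m i1 - g1 + m' i1) * 'X_i2 ^+ (m i2 - g2 + m' i2))).

(* Order: ord L = (msize L).-1 for L != 0, and ord 0 = -oo.
   Hence "ord P <= ord Q" (with -oo <= everything) is exactly msize P <= msize Q. *)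
Definition ord_le (K : fieldType) (P Q : {mpoly K[2]}) : bool := (msize P <= msize Q)%N.

Definition Sym (K : fieldType) (L : {mpoly K[2]}) : {mpoly K[2]} :=
  \sum_(m <- msupp L | mdeg m == (msize L).-1) L@_m *: 'X_[m].

Definition has_factorization (K : fieldType) (d1 d2 : K -> K) (k : nat)
    (S : 'I_k -> {mpoly K[2]}) (M : {mpoly K[2]}) : Prop :=
  exists F : 'I_k -> {mpoly K[2]},
    (forall i, Sym (F i) = S i) /\ M = \big[dmul d1 d2/1]_(i < k) F i.

Definition common_obstacle (K : fieldType) (d1 d2 : K -> K) (k : nat)
    (S : 'I_k -> {mpoly K[2]}) (L R : {mpoly K[2]}) : Prop :=
  has_factorization d1 d2 S (L - R) /\
  forall R', has_factorization d1 d2 S (L - R') -> ord_le R R'.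

Definition mdivides (K : fieldType) (p q : {mpoly K[2]}) : Prop :=
  exists r, q = p * r.

Definition mcoprime (K : fieldType) (p q : {mpoly K[2]}) : Prop :=
  forall c, mdivides c p -> mdivides c q -> c \is a GRing.unit.

Definition in_ideal (K : fieldType) (k : nat) (g : 'I_k -> {mpoly K[2]})
    (P : {mpoly K[2]}) : Prop :=
  exists c : 'I_k -> {mpoly K[2]}, P = \sum_(i < k) c i * g i.

(* Main.v *)
Require Import Defs.
From HB Require Import structures.
From mathcomp Require Import all_boot all_order all_algebra.
From mathcomp Require Import mpoly.
From mathcomp Require Import ssrcomplements.
From mathcomp Require Import zify ring.
Import GRing.Theory.
Local Open Scope ring_scope.

Ltac msz := repeat match goal with H : context [@mmeasure _ _ _ _] |- _ => revert H end;
  repeat match goal with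
  | |- context [@mmeasure ?n ?R ?mf ?p] => let x := fresh "ms" in set x := @mmeasure n R mf p; clearbody x
  end.
Ltac nlia := msz; repeat match goal with H : context [predn _] |- _ => rewrite -subn1 in H end; repeat rewrite -subn1; lia.

Section A.
Variable K : fieldType.
Implicit Types (p q : {mpoly K[2]}).

Lemma msize_leP p k : (forall m, (k <= mdeg m)%N -> p@_m = 0) -> (msize p <= k)%N.
Proof.
move=> h; rewrite msizeE big_seq; apply: (big_ind (fun x => x <= k)%N) => //= [x y hx hy|m hm].
  by rewrite geq_max hx hy.
rewrite ltnNge; apply/negP => /h; apply/eqP; by rewrite -mcoeff_msupp.
Qed.

Lemma msize_geP p k m : (msize p <= k)%N -> (k <= mdeg m)%N -> p@_m = 0.
Proof. move=> h1 h2; apply: memN_msupp_eq0; apply: msize_mdeg_ge; exact: leq_trans h2. Qed.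

Lemma mcoeff_sumX (r : seq 'X_{1..2}) (F : 'X_{1..2} -> K) m : uniq r ->
  (\sum_(m' <- r) F m' *: 'X_[m'] : {mpoly K[2]})@_m = if m \in r then F m else 0.
Proof.
elim: r => [|x r IH] /=; first by rewrite big_nil mcoeff0.
case/andP => hx hr; rewrite big_cons mcoeffD mcoeffZ mcoeffX IH // in_cons.
case: (eqVneq x m) => [<-|ne]; last by rewrite mulr0 add0r.
by rewrite (negbTE hx) mulr1 addr0.
Qed.

Lemma mcoeff_pihomog d p m :
  (pihomog mdeg d p)@_m = if mdeg m == d then p@_m else 0.
Proof.
rewrite pihomogE big_mkcond /=.
rewrite (eq_bigr (fun m' => (if mdeg m' == d then p@_m' else 0) *: 'X_[m'])); last by move=> m' _; case: ifP; rewrite ?scale0r.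
rewrite mcoeff_sumX ?msupp_uniq //.
case: (boolP (m \in msupp p)) => // /memN_msupp_eq0 ->; by case: ifP.
Qed.

Lemma SymE p : Sym p = pihomog mdeg (msize p).-1 p.
Proof. by rewrite /Sym pihomogE. Qed.

Lemma mcoeff_Sym p m : (Sym p)@_m = if mdeg m == (msize p).-1 then p@_m else 0.
Proof. by rewrite SymE mcoeff_pihomog. Qed.

Lemma msize_subSym p : (msize (p - Sym p) <= (msize p).-1)%N.
Proof.
apply: msize_leP => m hm; rewrite mcoeffB mcoeff_Sym.
case: eqP => [_|ne]; first by rewrite subrr.
rewrite subr0 (@msize_geP p (msize p)) //. move: hm ne. nlia.
Qed.

Lemma Sym_homog p : Sym p \is ((msize p).-1).-homog.
Proof. rewrite SymE; exact: pihomogP. Qed.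

Lemma homog_msize p n : p \is n.-homog -> (msize p <= n.+1)%N.
Proof.
move=> h; apply: msize_leP => m hm; apply: (dhomog_nemf_coeff h); apply/eqP; move: hm => /=. nlia.
Qed.

Lemma homog_msizeE p n : p != 0 -> p \is n.-homog -> msize p = n.+1.
Proof.
move=> nz h; have h' := dhomog_msize h.
have := dhomog_uniq (mf:=mdeg) nz h h'; have := mpolySpred _ nz.
move=> e1 e2; rewrite e1 -e2 //.
Qed.

Lemma Sym_add p g n : p != 0 -> p \is n.-homog -> (msize g <= n)%N -> Sym (p + g) = p.
Proof.
move=> nz hp hg; have sp := homog_msizeE _ _ nz hp.
have s : msize (p + g) = n.+1.
  apply/eqP; rewrite eqn_leq; apply/andP; split.
    by apply: leq_trans (msizeD_le _ _) _; rewrite geq_max sp leqnn; nlia.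
  rewrite ltnNge; apply/negP => h.
  have : (msize (p + g - g) <= n)%N.
    by apply: leq_trans (msizeD_le _ _) _; rewrite msizeN geq_max h hg.
  by rewrite addrK sp ltnn.
apply/mpolyP => m; rewrite mcoeff_Sym s /= mcoeffD.
case: eqP => e.
  by rewrite (@msize_geP g n m hg) ?addr0 // e.
by rewrite (dhomog_nemf_coeff hp) //; apply/eqP.
Qed.

End A.

Section B.
Variable K : fieldType.
Implicit Types (p q : {mpoly K[2]}).

Lemma sum_msupp_w (V : zmodType) k p (F : 'X_{1..2} -> K -> V) :
  (msize p <= k)%N -> (forall m, F m 0 = 0) ->
  \sum_(m <- msupp p) F m p@_m = \sum_(m : 'X_{1..2 < k}) F m p@_m.
Proof.
move=> lt_pk F0; pose I : subFinType _ := 'X_{1..2 < k}.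
rewrite (big_mksub I) //=; first last.
  by move=> x /msize_mdeg_lt /leq_trans; apply.
  by rewrite msupp_uniq.
by rewrite big_rmcond //= => i; move/memN_msupp_eq0 ->; rewrite F0.
Qed.

Lemma i2E : i2 = lift ord0 ord0. Proof. exact: val_inj. Qed.

Lemma mdeg2 (m : 'X_{1..2}) : mdeg m = (m i1 + m i2)%N.
Proof. by rewrite mdegE !big_ord_recl big_ord0 addn0 i2E. Qed.

Lemma mono_eq (m m' : 'X_{1..2}) : m i1 = m' i1 -> m i2 = m' i2 -> m = m'.
Proof.
move=> h1 h2; apply/mnmP => i; case: i => [[|[|i]] hi] //.
- by rewrite (_ : Ordinal hi = i1) //; exact: val_inj.
- by rewrite (_ : Ordinal hi = i2) //; exact: val_inj.
Qed.

Lemma XiE (i : 'I_2) u : ('X_i ^+ u : {mpoly K[2]}) = 'X_[U_(i) *+ u].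
Proof. by rewrite mpolyXn. Qed.

Lemma msize_mono (c : K) u v :
  (msize (c *: ('X_i1 ^+ u * 'X_i2 ^+ v) : {mpoly K[2]}) <= (u + v).+1)%N.
Proof.
apply: leq_trans (msizeZ_le _ _) _.
by rewrite !XiE -mpolyXD msizeX mdegD !mdegMn !mdeg1 !mul1n.
Qed.

Lemma msize_mono_le (c : K) u v B : ((u + v).+1 <= B)%N ->
  (msize (c *: ('X_i1 ^+ u * 'X_i2 ^+ v) : {mpoly K[2]}) <= B)%N.
Proof. by move=> h; apply: leq_trans (msize_mono _ _ _) h. Qed.

Lemma mono_XE (m : 'X_{1..2}) : ('X_i1 ^+ (m i1) * 'X_i2 ^+ (m i2) : {mpoly K[2]}) = 'X_[m].
Proof.
by rewrite [RHS]mpolyXE_id !big_ord_recl big_ord0 mulr1 i2E.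
Qed.

End B.

Section Dmul.
Variable K : fieldType.
Variables (d1 d2 : K -> K).
Hypotheses (hd1 : is_derivation d1) (hd2 : is_derivation d2).
Implicit Types (p q P Q : {mpoly K[2]}).

Lemma der0 (d : K -> K) : is_derivation d -> d 0 = 0.
Proof.
case=> hD _; have := hD 0 0; rewrite addr0 => /eqP.
by rewrite -subr_eq subrr eq_sym => /eqP.
Qed.

Lemma derB (d : K -> K) : is_derivation d -> forall a b, d (a - b) = d a - d b.
Proof.
move=> hd a b; have [hD _] := hd; apply/eqP; rewrite eq_sym subr_eq -hD.
by rewrite subrK.
Qed.

Lemma iter0 (d : K -> K) g : is_derivation d -> iter g d 0 = 0.
Proof. by move=> hd; elim: g => //= g ->; rewrite der0. Qed.

Lemma iterB (d : K -> K) g : is_derivation d -> forall a b, iter g d (a - b) = iter g d a - iter g d b.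
Proof. by move=> hd a b; elim: g => //= g ->; rewrite derB. Qed.

Definition dterm (m : 'X_{1..2}) (c : K) (m' : 'X_{1..2}) (c' : K) : {mpoly K[2]} :=
  \sum_(g1 < (m i1).+1) \sum_(g2 < (m i2).+1)
     ((('C(m i1, g1) * 'C(m i2, g2))%:R * c * iter g1 d1 (iter g2 d2 c'))
        *: ('X_i1 ^+ (m i1 - g1 + m' i1) * 'X_i2 ^+ (m i2 - g2 + m' i2))).

Definition dinner Q m c := \sum_(m' <- msupp Q) dterm m c m' Q@_m'.

Lemma dmulE P Q : dmul d1 d2 P Q = \sum_(m <- msupp P) dinner Q m P@_m.
Proof. by []. Qed.

Lemma dtermBl m a b m' c' : dterm m (a - b) m' c' = dterm m a m' c' - dterm m b m' c'.
Proof.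
rewrite /dterm -sumrB; apply: eq_bigr => g1 _; rewrite -sumrB; apply: eq_bigr => g2 _.
by rewrite mulrBr mulrBl scalerBl.
Qed.

Lemma dtermBr m c m' a b : dterm m c m' (a - b) = dterm m c m' a - dterm m c m' b.
Proof.
rewrite /dterm -sumrB; apply: eq_bigr => g1 _; rewrite -sumrB; apply: eq_bigr => g2 _.
by rewrite (iterB _ _ hd2) (iterB _ _ hd1) mulrBr scalerBl.
Qed.

Lemma dterm0l m m' c' : dterm m 0 m' c' = 0.
Proof. by have := dtermBl m 0 0 m' c'; rewrite subr0 subrr. Qed.

Lemma dterm0r m c m' : dterm m c m' 0 = 0.
Proof. by have := dtermBr m c m' 0 0; rewrite subr0 subrr. Qed.

Lemma dinner0 Q m : dinner Q m 0 = 0.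
Proof. by rewrite /dinner big1 // => m' _; rewrite dterm0l. Qed.

Lemma dinnerB Q m a b : dinner Q m (a - b) = dinner Q m a - dinner Q m b.
Proof. by rewrite /dinner -sumrB; apply: eq_bigr => m' _; rewrite dtermBl. Qed.

Lemma dmul_subl P P' Q : dmul d1 d2 (P - P') Q = dmul d1 d2 P Q - dmul d1 d2 P' Q.
Proof.
pose k := maxn (msize P) (maxn (msize P') (msize (P - P'))).
rewrite !dmulE !(@sum_msupp_w _ _ k _ (dinner Q)); try by [rewrite /k; lia | move=> ?; exact: dinner0].
by rewrite -sumrB; apply: eq_bigr => m _; rewrite mcoeffB dinnerB.
Qed.

Lemma dmul_subr P Q Q' : dmul d1 d2 P (Q - Q') = dmul d1 d2 P Q - dmul d1 d2 P Q'.
Proof.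
rewrite !dmulE -sumrB; apply: eq_bigr => m _; rewrite /dinner.
pose k := maxn (msize Q) (maxn (msize Q') (msize (Q - Q'))).
rewrite !(@sum_msupp_w _ _ k _ (dterm m P@_m)); try by [rewrite /k; lia | move=> ?; exact: dterm0r].
by rewrite -sumrB; apply: eq_bigr => m' _; rewrite mcoeffB dtermBr.
Qed.

Lemma msize_sum_le (I : eqType) (r : seq I) (F : I -> {mpoly K[2]}) (B : nat) :
  (forall i, i \in r -> msize (F i) <= B)%N -> (msize (\sum_(i <- r) F i) <= B)%N.
Proof.
move=> h; rewrite big_seq; apply: (big_ind (fun x => msize x <= B)%N) => //.
- by rewrite msize0.
- by move=> x y hx hy; apply: leq_trans (msizeD_le _ _) _; rewrite geq_max hx hy.
Qed.

Lemma msize_sum_le' (n : nat) (F : 'I_n -> {mpoly K[2]}) (B : nat) :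
  (forall i, msize (F i) <= B)%N -> (msize (\sum_(i < n) F i) <= B)%N.
Proof. by move=> h; apply: msize_sum_le => i _; apply: h. Qed.

Lemma dterm00 (m : 'X_{1..2}) (c : K) (m' : 'X_{1..2}) (c' : K) :
  ((('C(m i1, @ord0 (m i1)) * 'C(m i2, @ord0 (m i2)))%:R * c * iter (@ord0 (m i1)) d1 (iter (@ord0 (m i2)) d2 c'))
        *: ('X_i1 ^+ (m i1 - @ord0 (m i1) + m' i1) * 'X_i2 ^+ (m i2 - @ord0 (m i2) + m' i2)) : {mpoly K[2]})
  = (c * c') *: 'X_[(m + m')%MM].
Proof.
by rewrite /= !bin0 mul1r subn0 subn0 -(mono_XE _ (m + m')%MM) !mnmDE.
Qed.

Lemma dmul_deg P Q : (msize (dmul d1 d2 P Q - P * Q) <= (msize P + msize Q).-2)%N.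
Proof.
have PQ : P * Q = \sum_(m <- msupp P) \sum_(m' <- msupp Q) (P@_m * Q@_m') *: 'X_[(m + m')%MM].
  by rewrite mpolyME big_allpairs.
rewrite dmulE PQ /dinner -sumrB; apply: msize_sum_le => m hm.
rewrite -sumrB; apply: msize_sum_le => m' hm'.
have hmP := msize_mdeg_lt hm; have hmQ := msize_mdeg_lt hm'.
rewrite mdeg2 in hmP; rewrite mdeg2 in hmQ.
rewrite /dterm big_ord_recl [X in X + _ - _]big_ord_recl dterm00.
have -> : forall a b c : {mpoly K[2]}, a + b + c - a = b + c.
  by move=> a b c; rewrite addrAC [a + b]addrC addrK.
apply: leq_trans (msizeD_le _ _) _; rewrite geq_max; apply/andP; split.
- apply: msize_sum_le' => g2; apply: msize_mono_le.
  have := ltn_ord g2; rewrite lift0; nlia.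
- apply: msize_sum_le' => g1; apply: msize_sum_le' => g2.
  apply: msize_mono_le.
  have := ltn_ord g1; have := ltn_ord g2; rewrite lift0; nlia.
Qed.

End Dmul.

Section C0.
Variable K : fieldType.
Implicit Types (p q : {mpoly K[2]}).

Lemma msizeB_le p q B : (msize p <= B)%N -> (msize q <= B)%N -> (msize (p - q) <= B)%N.
Proof. by move=> hp hq; apply: leq_trans (msizeD_le _ _) _; rewrite msizeN geq_max hp hq. Qed.

Lemma msizeD_le' p q B : (msize p <= B)%N -> (msize q <= B)%N -> (msize (p + q) <= B)%N.
Proof. by move=> hp hq; apply: leq_trans (msizeD_le _ _) _; rewrite geq_max hp hq. Qed.

Lemma msizeM_le' p q a b : (msize p <= a)%N -> (msize q <= b)%N -> (msize (p * q) <= (a + b).-1)%N.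
Proof.
have [->|nzp] := eqVneq p 0; first by rewrite mul0r msize0.
have [->|nzq] := eqVneq q 0; first by rewrite mulr0 msize0.
move=> hp hq; rewrite msizeM //; nlia.
Qed.

Lemma msize_eq0 p : (msize p <= 0)%N -> p = 0.
Proof. by rewrite leqn0 msize_poly_eq0 => /eqP. Qed.

Definition Tm k (S : 'I_k -> {mpoly K[2]}) (i : 'I_k) := \prod_(j < k | j != i) S j.
Arguments Tm {k}.

Lemma T_rec0 k (S : 'I_k.+1 -> {mpoly K[2]}) : Tm S ord0 = \prod_(j < k) S (lift ord0 j).
Proof.
by rewrite /Tm big_mkcond big_ord_recl /= mul1r.
Qed.

Lemma T_recl k (S : 'I_k.+1 -> {mpoly K[2]}) i :
  Tm S (lift ord0 i) = S ord0 * Tm (fun j => S (lift ord0 j)) i.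
Proof.
rewrite /Tm big_mkcond big_ord_recl /=; congr (_ * _).
rewrite [RHS]big_mkcond; apply: eq_bigr => j _.
by rewrite (inj_eq (@lift_inj _ ord0)).
Qed.

Lemma msize_prod_cond k (S : 'I_k -> {mpoly K[2]}) (e : 'I_k -> nat) (P : pred 'I_k) :
  (forall i, msize (S i) = (e i).+1) ->
  msize (\prod_(j < k | P j) S j) = (\sum_(j < k | P j) e j).+1.
Proof.
move=> hS; apply: (big_ind2 (fun p n => msize p = n.+1)) => //.
- by rewrite msize1.
- move=> p1 n1 p2 n2 h1 h2; rewrite msizeM ?h1 ?h2 //; last first.
  + by rewrite -msize_poly_eq0 h2.
  + by rewrite -msize_poly_eq0 h1.
  by rewrite addSn addnS.
Qed.

Lemma sum_split k (e : 'I_k -> nat) i : (\sum_(j < k) e j = e i + \sum_(j < k | j != i) e j)%N.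
Proof. by rewrite (bigD1 i). Qed.

End C0.
Arguments Tm {K k}.
Arguments msize_prod_cond {K k}.
Arguments sum_split {k}.

Section Fold.
Variable K : fieldType.
Variables (d1 d2 : K -> K).
Hypotheses (hd1 : is_derivation d1) (hd2 : is_derivation d2).

Definition Cf k (F : 'I_k -> {mpoly K[2]}) := \big[dmul d1 d2/1]_(i < k) F i.
Arguments Cf {k}.

Lemma Cf_rec k (F : 'I_k.+1 -> {mpoly K[2]}) : Cf F = dmul d1 d2 (F ord0) (Cf (fun i => F (lift ord0 i))).
Proof. by rewrite /Cf big_ord_recl. Qed.

Lemma fold_C2 k (S : 'I_k -> {mpoly K[2]}) (e : 'I_k -> nat) :
  (forall i, msize (S i) = (e i).+1) ->
  (msize (Cf S - \prod_(i < k) S i) <= \sum_(i < k) e i)%N.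
Proof.
elim: k S e => [|k IH] S e hS.
  by rewrite /Cf !big_ord0 subrr msize0.
rewrite Cf_rec big_ord_recl [X in (_ <= X)%N]big_ord_recl.
set S' := fun i => S (lift ord0 i).
set e' := fun i => e (lift ord0 i).
have hS' : forall i, msize (S' i) = (e' i).+1 by move=> i; apply: hS.
have IH' := IH S' e' hS'.
have hP := msize_prod_cond S' e' xpredT hS'.
set B0 := Cf S' in IH' *.
set E' := (\sum_(i < k) e' i)%N in IH' hP *.
have hB0 : (msize B0 <= E'.+1)%N.
  rewrite -(subrK (\prod_(i < k) S' i) B0); apply: msizeD_le'.
    by apply: leq_trans IH' _.
  by rewrite hP.
have -> : dmul d1 d2 (S ord0) B0 - S ord0 * \prod_(i < k) S (lift ord0 i) =
   (dmul d1 d2 (S ord0) B0 - S ord0 * B0) + S ord0 * (B0 - \prod_(i < k) S' i).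
  by rewrite mulrBr addrA subrK.
apply: msizeD_le'.
  apply: leq_trans (@dmul_deg _ d1 d2 _ _) _; rewrite hS; move: hB0; nlia.
apply: leq_trans (@msizeM_le' _ _ _ _ _ (leqnn _) IH') _; rewrite hS; nlia.
Qed.

Lemma msize_GT k (S F : 'I_k -> {mpoly K[2]}) (e : 'I_k -> nat) :
  (forall i, msize (S i) = (e i).+1) -> (forall i, (msize (F i - S i) <= e i)%N) ->
  (msize (\sum_(i < k) (F i - S i) * Tm S i) <= \sum_(i < k) e i)%N.
Proof.
move=> hS hF; apply: msize_sum_le' => i.
apply: leq_trans (@msizeM_le' _ _ _ _ _ (hF i) (leqnn _)) _.
by rewrite /Tm (msize_prod_cond S e) // (sum_split e i) addnS.
Qed.

Lemma fold_C1 k (S F : 'I_k -> {mpoly K[2]}) (e : 'I_k -> nat) :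
  (forall i, msize (S i) = (e i).+1) -> (forall i, (msize (F i - S i) <= e i)%N) ->
  (msize (Cf F - Cf S - \sum_(i < k) (F i - S i) * Tm S i) <= (\sum_(i < k) e i).-1)%N.
Proof.
elim: k S F e => [|k IH] S F e hS hF.
  by rewrite /Cf !big_ord0 subrr sub0r oppr0 msize0.
rewrite !Cf_rec !big_ord_recl.
rewrite (eq_bigr (fun i : 'I_k => (F (lift ord0 i) - S (lift ord0 i)) * (S ord0 * Tm (fun j => S (lift ord0 j)) i))); last by move=> i _; rewrite T_recl.
rewrite T_rec0.
set S' := fun i => S (lift ord0 i).
set F' := fun i => F (lift ord0 i).
set e' := fun i => e (lift ord0 i).
have hS' : forall i, msize (S' i) = (e' i).+1 by move=> i; apply: hS.
have hF' : forall i, (msize (F' i - S' i) <= e' i)%N by move=> i; apply: hF.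
have IH' := IH S' F' e' hS' hF'.
have hSig := @msize_GT _ S' F' e' hS' hF'.
have hC2 := @fold_C2 _ S' e' hS'.
have hP := msize_prod_cond S' e' xpredT hS'.
set B := Cf F' in IH' *; set B0 := Cf S' in IH' hC2 *.
set Sig := \sum_(i < k) (F' i - S' i) * Tm S' i in IH' hSig *.
set E' := (\sum_(i < k) e' i)%N in IH' hSig hC2 hP *.
set A := F ord0; set A0 := S ord0.
have hA0 : msize A0 = (e ord0).+1 by apply: hS.
have hg : (msize (A - A0) <= e ord0)%N by apply: hF.
have hBB0 : (msize (B - B0) <= E')%N.
  rewrite -(subrK Sig (B - B0)); apply: msizeD_le' => //; apply: leq_trans IH' _; nlia.
have hBP : (msize (B - \prod_(i < k) S' i) <= E')%N.
  have -> : B - \prod_(i < k) S' i = (B - B0) + (B0 - \prod_(i < k) S' i) by rewrite addrA subrK.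
  exact: msizeD_le'.
have hB : (msize B <= E'.+1)%N.
  rewrite -(subrK (\prod_(i < k) S' i) B); apply: msizeD_le'; first by apply: leq_trans hBP _.
  by rewrite hP.
have eqS : \sum_(i < k) (F (lift ord0 i) - S (lift ord0 i)) * (A0 * Tm S' i) = A0 * Sig.
  by rewrite /Sig mulr_sumr; apply: eq_bigr => i _; rewrite mulrCA.
rewrite eqS.
have -> : dmul d1 d2 A B - dmul d1 d2 A0 B0 - ((A - A0) * \prod_(i < k) S' i + A0 * Sig) =
  (dmul d1 d2 (A - A0) B - (A - A0) * B) + (A - A0) * (B - \prod_(i < k) S' i)
  + (dmul d1 d2 A0 (B - B0) - A0 * (B - B0)) + A0 * (B - B0 - Sig).
  rewrite (@dmul_subl _ d1 d2) (@dmul_subr _ d1 d2 hd1 hd2); ring.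
apply: msizeD_le'; [apply: msizeD_le'; [apply: msizeD_le'|]|].
- apply: leq_trans (@dmul_deg _ d1 d2 _ _) _; move: hg hB; nlia.
- apply: leq_trans (@msizeM_le' _ _ _ _ _ hg hBP) _; nlia.
- apply: leq_trans (@dmul_deg _ d1 d2 _ _) _; move: hBB0; rewrite hA0; nlia.
- case: (posnP E') => hE.
    by rewrite hE in IH'; rewrite (@msize_eq0 _ _ IH') mulr0 msize0.
  apply: leq_trans (@msizeM_le' _ _ _ _ _ (eq_leq hA0) IH') _; nlia.
Qed.

End Fold.

Ltac ssz := repeat match goal with H : context [size _] |- _ => revert H end;
  repeat match goal with
  | |- context [size ?p] => let x := fresh "sz" in set x := size p; clearbody x
  end.
Ltac nlia2 := ssz; repeat match goal with H : context [predn _] |- _ => rewrite -subn1 in H end; repeat rewrite -subn1; lia.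

Section Gen.
Variable R : comRingType.

Lemma prodT0 k (a : 'I_k.+1 -> R) : \prod_(j < k.+1 | j != ord0) a j = \prod_(j < k) a (lift ord0 j).
Proof. by rewrite big_mkcond big_ord_recl /= mul1r. Qed.

Lemma prodTl k (a : 'I_k.+1 -> R) i :
  \prod_(j < k.+1 | j != lift ord0 i) a j = a ord0 * \prod_(j < k | j != i) a (lift ord0 j).
Proof.
rewrite big_mkcond big_ord_recl /=; congr (_ * _).
rewrite [RHS]big_mkcond; apply: eq_bigr => j _.
by rewrite (inj_eq (@lift_inj _ ord0)).
Qed.

End Gen.

Section U.
Variable K : fieldType.

Lemma U2 (A B p : {poly K}) (al be : nat) : coprimep A B -> size A = al.+1 ->
  (size B <= be.+1)%N -> (size p <= al + be)%N ->
  exists u v : {poly K}, [/\ (size u <= be)%N, (size v <= al)%N & p = u * A + v * B].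
Proof.
move=> cop sA sB sp.
move/Bezout_eq1_coprimepP: cop => [[u0 v0] /= huv].
have Anz : A != 0 by rewrite -size_poly_eq0 sA.
set v := (p * v0) %% A; set q := (p * v0) %/ A.
have hpv : p * v0 = q * A + v := divp_eq _ _.
have eq : p = (p * u0 + q * B) * A + v * B.
  have hv : v = p * v0 - q * A by rewrite hpv addrC addKr.
  rewrite hv -{1}[p]mulr1 -huv; ring.
exists (p * u0 + q * B), v; split => //.
- set u := p * u0 + q * B in eq *.
  have [->|unz] := eqVneq u 0; first by rewrite size_poly0.
  have : u * A = p - v * B by rewrite [in RHS]eq addrK.
  move=> huA.
  have h1 : (size (u * A)%R <= al + be)%N.
    rewrite huA; apply: leq_trans (size_polyD _ _) _; rewrite size_polyN geq_max sp /=.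
    apply: leq_trans (size_polyMleq _ _) _.
    have : (size v < size A)%N by rewrite ltn_modp.
    rewrite sA; move: sB. nlia2.
  move: h1; rewrite size_mul //; move: sA; nlia2.
- have : (size v < size A)%N by rewrite ltn_modp.
  by move: sA; nlia2.
Qed.

Lemma psize_prod k (a : 'I_k -> {poly K}) (e : 'I_k -> nat) (P : pred 'I_k) :
  (forall i, a i != 0) -> (forall i, (size (a i) <= (e i).+1)%N) ->
  \prod_(j < k | P j) a j != 0 /\ (size (\prod_(j < k | P j) a j)%R <= (\sum_(j < k | P j) e j).+1)%N.
Proof.
move=> hnz hs.
pose Q (q : {poly K}) (n : nat) := q != 0 /\ (size q <= n.+1)%N.
suff : Q (\prod_(j < k | P j) a j) (\sum_(j < k | P j) e j) by [].
apply: (big_ind2 Q) => //.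
- by rewrite /Q oner_eq0 size_poly1.
- move=> q1 n1 q2 n2 [nz1 s1] [nz2 s2]; split; first by rewrite mulf_neq0.
  rewrite size_mul //; move: s1 s2; nlia2.
Qed.

Lemma psize_prod_full k (a : 'I_k -> {poly K}) (e : 'I_k -> nat) (P : pred 'I_k) :
  (forall i, size (a i) = (e i).+1) ->
  size (\prod_(j < k | P j) a j) = (\sum_(j < k | P j) e j).+1.
Proof.
move=> hs.
pose Q (q : {poly K}) (n : nat) := size q = n.+1.
suff : Q (\prod_(j < k | P j) a j) (\sum_(j < k | P j) e j) by [].
apply: (big_ind2 Q) => //.
- by rewrite /Q size_poly1.
- rewrite /Q => q1 n1 q2 n2 s1 s2; rewrite size_mul ?s1 ?s2 ?addnS //.
  + by rewrite -size_poly_eq0 s1.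
  + by rewrite -size_poly_eq0 s2.
- by move=> i _; apply: hs.
Qed.

Lemma coprimep_prodl k (a : 'I_k -> {poly K}) (b : {poly K}) :
  (forall i, coprimep (a i) b) -> coprimep (\prod_(i < k) a i) b.
Proof.
move=> h; apply: (big_ind (fun q => coprimep q b)) => //.
- exact: coprime1p.
- by move=> x y hx hy; rewrite coprimepMl hx hy.
Qed.

Lemma Ugen k (a : 'I_k -> {poly K}) (e : 'I_k -> nat) :
  (forall i, a i != 0) -> (forall i, (size (a i) <= (e i).+1)%N) ->
  (forall i j, i != j -> coprimep (a i) (a j)) ->
  (forall i j, i != j -> size (a i) = (e i).+1 \/ size (a j) = (e j).+1) ->
  forall p : {poly K}, (size p <= \sum_(i < k) e i)%N ->
  exists c : 'I_k -> {poly K}, (forall i, (size (c i) <= e i)%N) /\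
     p = \sum_(i < k) c i * \prod_(j < k | j != i) a j.
Proof.
elim: k a e => [|k IH] a e hnz hs hcop hdef p sp.
  exists (fun _ => 0); split; first by case.
  by move: sp; rewrite big_ord0 size_poly_leq0 => /eqP ->; rewrite big_ord0.
set a' := fun i => a (lift ord0 i); set e' := fun i => e (lift ord0 i).
have hnz' : forall i, a' i != 0 by move=> i; apply: hnz.
have hs' : forall i, (size (a' i) <= (e' i).+1)%N by move=> i; apply: hs.
have hcop' : forall i j, i != j -> coprimep (a' i) (a' j).
  by move=> i j ne; apply: hcop; rewrite (inj_eq (@lift_inj _ ord0)).
have hdef' : forall i j, i != j -> size (a' i) = (e' i).+1 \/ size (a' j) = (e' j).+1.
  by move=> i j ne; apply: hdef; rewrite (inj_eq (@lift_inj _ ord0)).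
set A := \prod_(i < k) a' i; set B := a ord0.
set al := (\sum_(i < k) e' i)%N; set be := e ord0.
have [Anz sA] := @psize_prod _ a' e' xpredT hnz' hs'.
rewrite -/A -/al in Anz sA.
have cop : coprimep A B.
  apply: coprimep_prodl => i; apply: hcop; by rewrite eq_sym neq_lift.
have sp' : (size p <= al + be)%N by move: sp; rewrite big_ord_recl addnC.
have [c0 [w [sc0 sw ep]]] : exists c0 w : {poly K}, [/\ (size c0 <= be)%N, (size w <= al)%N & p = c0 * A + w * B].
  have [fB|nfB] := eqVneq (size B) be.+1.
    have [u [v [su sv ->]]] := @U2 B A p be al ltac:(by rewrite coprimep_sym) fB sA ltac:(by rewrite addnC).
    by exists v, u; split => //; rewrite addrC.
  have fA : size A = al.+1.
    apply: psize_prod_full => i; have := hdef ord0 (lift ord0 i) (neq_lift _ _).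
    by case => // h; move: nfB; rewrite /B h eqxx.
  have [u [v [su sv ->]]] := @U2 A B p al be cop fA (hs ord0) sp'.
  by exists u, v.
have [c' [sc' ew]] := IH a' e' hnz' hs' hcop' hdef' w sw.
exists (fun i => match unlift ord0 i with Some j => c' j | None => c0 end); split.
  by move=> i; case: (unliftP ord0 i) => [j ->|->] /=; rewrite ?liftK ?unlift_none.
rewrite big_ord_recl /= unlift_none prodT0 -/A ep; congr (_ + _).
rewrite ew mulr_suml; apply: eq_bigr => i _; rewrite liftK prodTl -/B.
by rewrite mulrCA mulrC.
Qed.

End U.

Section H.
Variable K : fieldType.
Implicit Types (p q P : {mpoly K[2]}).

Definition phi : {mpoly K[2]} -> {poly K} :=
  mmap (@polyC K) (fun i : 'I_2 => if i == i1 then 'X else 1).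
HB.instance Definition _ := GRing.RMorphism.copy phi
  (mmap (@polyC K) (fun i : 'I_2 => if i == i1 then 'X else 1)).

Lemma phiM p q : phi (p * q) = phi p * phi q.
Proof. exact: rmorphM. Qed.

Lemma phiB p q : phi (p - q) = phi p - phi q.
Proof. exact: rmorphB. Qed.

Lemma phi1 : phi 1 = 1.
Proof. exact: rmorph1. Qed.

Lemma phiZX c (m : 'X_{1..2}) : phi (c *: 'X_[m]) = c *: 'X^(m i1).
Proof.
rewrite /phi mmapZ mmapX /mmap1 !big_ord_recl big_ord0 /= -i2E /=.
by rewrite expr1n !mulr1 mul_polyC.
Qed.

Definition mono (a b : nat) : 'X_{1..2} := [multinom (if j == i1 then a else b) | j < 2].

Lemma mono1 a b : mono a b i1 = a.
Proof. by rewrite /mono mnmE eqxx. Qed.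

Lemma mono2 a b : mono a b i2 = b.
Proof. by rewrite /mono mnmE. Qed.

Lemma mdeg_mono a b : mdeg (mono a b) = (a + b)%N.
Proof. by rewrite mdeg2 mono1 mono2. Qed.

Definition Hn (n : nat) (q : {poly K}) : {mpoly K[2]} :=
  \sum_(i < n.+1) q`_i *: 'X_[mono i (n - i)].

Lemma HnD n (p q : {poly K}) : Hn n (p + q) = Hn n p + Hn n q.
Proof. by rewrite /Hn -big_split; apply: eq_bigr => i _; rewrite coefD scalerDl. Qed.

Lemma Hn0 n : Hn n 0 = 0.
Proof. by rewrite /Hn big1 // => i _; rewrite coef0 scale0r. Qed.

Lemma HnZ n c (q : {poly K}) : Hn n (c *: q) = c *: Hn n q.
Proof. by rewrite /Hn scaler_sumr; apply: eq_bigr => i _; rewrite coefZ scalerA. Qed.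

Lemma Hn_sum n (I : Type) (r : seq I) (F : I -> {poly K}) :
  Hn n (\sum_(i <- r) F i) = \sum_(i <- r) Hn n (F i).
Proof. exact: (big_morph (Hn n) (HnD n) (Hn0 n)). Qed.

Lemma HnXn n j : (j <= n)%N -> Hn n 'X^j = 'X_[mono j (n - j)].
Proof.
move=> hj; rewrite /Hn (bigD1 (Ordinal (hj : (j < n.+1)%N))) //= coefXn eqxx scale1r.
rewrite big1 ?addr0 // => i ne; rewrite coefXn.
case: eqP => [e|]; last by rewrite scale0r.
by move: ne; rewrite -(inj_eq val_inj) /= e eqxx.
Qed.

Lemma Hn_homog n (q : {poly K}) : Hn n q \is n.-homog.
Proof.
rewrite /Hn; apply: rpred_sum => i _; apply: rpredZ.
rewrite dhomogX /= mdeg_mono; apply/eqP; have := ltn_ord i; lia.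
Qed.

Lemma phi_Hn n (q : {poly K}) : (size q <= n.+1)%N -> phi (Hn n q) = q.
Proof.
move=> hq; rewrite /Hn rmorph_sum /=.
under eq_bigr => i _ do rewrite phiZX mono1.
rewrite -poly_def; apply/polyP => j; rewrite coef_poly; case: ltnP => // h.
by rewrite nth_default //; apply: leq_trans hq h.
Qed.

Lemma phiE P : phi P = \sum_(m <- msupp P) P@_m *: 'X^(m i1).
Proof.
by rewrite {1}[P]mpolyE rmorph_sum /=; apply: eq_bigr => m _; rewrite phiZX.
Qed.

Lemma Hn_phi n P : P \is n.-homog -> Hn n (phi P) = P.
Proof.
move=> hP; rewrite phiE Hn_sum [RHS]mpolyE big_seq [RHS]big_seq.
apply: eq_bigr => m hm; rewrite HnZ; have := dhomog_mf hP hm; rewrite /= mdeg2 => hd.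
rewrite HnXn; last by lia.
congr (_ *: 'X_[_]); apply: mono_eq; rewrite ?mono1 ?mono2 //; lia.
Qed.

Lemma phi_size n P : P \is n.-homog -> (size (phi P) <= n.+1)%N.
Proof.
move=> hP; rewrite phiE big_seq; apply: (big_ind (fun q : {poly K} => size q <= n.+1)%N).
- by rewrite size_poly0.
- by move=> x y hx hy; apply: leq_trans (size_polyD _ _) _; rewrite geq_max hx hy.
- move=> m hm; apply: leq_trans (size_scale_leq _ _) _; rewrite size_polyXn ltnS.
  have := dhomog_mf hP hm; rewrite /= mdeg2; lia.
Qed.

Lemma Hn_mul a b (f g : {poly K}) : (size f <= a.+1)%N -> (size g <= b.+1)%N ->
  Hn (a + b) (f * g) = Hn a f * Hn b g.
Proof.
move=> hf hg; have hom : Hn a f * Hn b g \is (a + b).-homog by apply: dhomogM; apply: Hn_homog.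
by rewrite -[RHS](Hn_phi _ _ hom) phiM !phi_Hn.
Qed.

End H.
Arguments phi {K}.
Arguments Hn {K}.
Arguments Hn_phi {K n P}.
Arguments phi_size {K n P}.
Arguments Hn_mul {K a b f g}.
Arguments phi_Hn {K n q}.

Section P.
Variable K : fieldType.
Implicit Types (p q P : {mpoly K[2]}).

Lemma phi_unit p : p \is a GRing.unit -> size (phi p) = 1%N.
Proof.
move=> hu; have : phi p \is a GRing.unit by rewrite rmorph_unit.
by rewrite poly_unitE => /andP [/eqP].
Qed.

Lemma phi_nz n P : P != 0 -> P \is n.-homog -> phi P != 0.
Proof.
move=> nz hP; apply: contra nz => /eqP h.
by rewrite -(Hn_phi hP) h Hn0.
Qed.

Arguments phi_nz {n P}.

Lemma cop_transfer (S T : {mpoly K[2]}) e f : S != 0 -> T != 0 ->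
  S \is e.-homog -> T \is f.-homog -> mcoprime S T -> coprimep (phi S) (phi T).
Proof.
move=> nzS nzT hS hT cop; apply: contraT => ncop.
set g := gcdp (phi S) (phi T).
have pSnz := phi_nz nzS hS; have pTnz := phi_nz nzT hT.
have gnz : g != 0 by rewrite gcdp_eq0 negb_and pSnz.
have g1 : size g != 1%N by rewrite -coprimep_def.
have g2 : (2 <= size g)%N.
  move: gnz g1; rewrite -size_poly_eq0; case: (size g) => [|[|n]] //.
set a := (size g).-1.
have sg : (size g <= a.+1)%N by rewrite /a; lia.
have divs : forall (U : {mpoly K[2]}) u, U != 0 -> U \is u.-homog -> g %| phi U ->
    mdivides (Hn a g) U.
  move=> U u nzU hU /dvdpP [r hr].
  have pUnz := phi_nz nzU hU.
  have rnz : r != 0 by apply: contra pUnz => /eqP r0; rewrite hr r0 mul0r.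
  have sU := phi_size hU.
  have : size (phi U) = (size r + size g).-1 by rewrite hr size_mul.
  move=> sU'.
  have sr : (size r <= (u - a).+1)%N by move: sU sU' g2; rewrite /a; nlia2.
  have ha : (a <= u)%N by move: sU sU' g2 rnz; rewrite /a -size_poly_eq0; nlia2.
  exists (Hn (u - a) r).
  rewrite -(Hn_phi hU) hr.
  by rewrite -{1}(subnK ha) (Hn_mul sr sg) mulrC.
have dS := divs S e nzS hS (dvdp_gcdl _ _).
have dT := divs T f nzT hT (dvdp_gcdr _ _).
have := @phi_unit (Hn a g) (cop _ dS dT); rewrite phi_Hn // => h.
by rewrite h in g1.
Qed.

Lemma def_transfer (S T : {mpoly K[2]}) e f : S != 0 -> T != 0 ->
  S \is e.-homog -> T \is f.-homog -> mcoprime S T ->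
  (size (phi S) <= e)%N -> (size (phi T) <= f)%N -> False.
Proof.
move=> nzS nzT hS hT cop sS sT.
set X := Hn 1 (1 : {poly K}).
have pX : phi X = 1 by rewrite phi_Hn // size_poly1.
have Xnz : X != 0 by apply/eqP => h; move: pX; rewrite h rmorph0 => /eqP; rewrite eq_sym oner_eq0.
have Xh : X \is 1.-homog := Hn_homog _ 1 1.
have sX : msize X = 2%N := @homog_msizeE _ X 1 Xnz Xh.
have nu : ~~ (X \is a GRing.unit).
  apply/negP => /unitrP [v [hv _]].
  have vnz : v != 0 by apply: contra_eqN hv => /eqP ->; rewrite mul0r eq_sym oner_eq0.
  have := congr1 (fun p => msize p) hv; rewrite /= msizeM // sX msize1.
  move: vnz; rewrite -msize_poly_eq0; nlia.
have divs : forall (U : {mpoly K[2]}) u, U != 0 -> U \is u.-homog -> (size (phi U) <= u)%N ->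
    mdivides X U.
  move=> U u nzU hU sU.
  have pUnz := phi_nz nzU hU.
  have hu : (0 < u)%N by move: sU pUnz; rewrite -size_poly_eq0; nlia2.
  exists (Hn u.-1 (phi U)).
  have e1 : u = (u.-1 + 1)%N by rewrite addn1 prednK.
  rewrite -{1}(Hn_phi hU).
  have -> : Hn u (phi U) = Hn (u.-1 + 1) (phi U * 1) by rewrite mulr1 -e1.
  rewrite Hn_mul ?size_poly1 //; last by rewrite prednK.
  by rewrite mulrC.
by move: nu; rewrite (cop _ (divs S e nzS hS sS) (divs T f nzT hT sT)).
Qed.

Lemma homog_prod_cond k (S : 'I_k -> {mpoly K[2]}) (e : 'I_k -> nat) (Q : pred 'I_k) :
  (forall i, S i \is (e i).-homog) -> \prod_(j < k | Q j) S j \is (\sum_(j < k | Q j) e j).-homog.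
Proof.
move=> h; pose R (p : {mpoly K[2]}) (n : nat) := p \is n.-homog.
suff : R (\prod_(j < k | Q j) S j) (\sum_(j < k | Q j) e j) by [].
apply: (big_ind2 R) => //; rewrite /R.
- exact: dhomog1.
- by move=> p1 n1 p2 n2 h1 h2; apply: dhomogM.
- by move=> i _; apply: h.
Qed.

Lemma part1 k (S : 'I_k -> {mpoly K[2]}) :
  (forall i, S i != 0) -> (forall i, S i \is ((msize (S i)).-1).-homog) ->
  (forall i j, i != j -> mcoprime (S i) (S j)) ->
  forall P, (0 < \sum_(i < k) (msize (S i)).-1)%N ->
  P \is (\sum_(i < k) (msize (S i)).-1).-1.-homog ->
  exists G : 'I_k -> {mpoly K[2]}, (forall i, (msize (G i) <= (msize (S i)).-1)%N) /\
    P = \sum_(i < k) G i * \prod_(j < k | j != i) S j.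
Proof.
move=> hnz hhom hcop P dpos hP.
set e := fun i => (msize (S i)).-1.
set d := (\sum_(i < k) e i)%N in dpos hP.
have hs : forall i, (size (phi (S i)) <= (e i).+1)%N by move=> i; apply: phi_size.
have hdef : forall i j, i != j -> size (phi (S i)) = (e i).+1 \/ size (phi (S j)) = (e j).+1.
  move=> i j ne.
  have [hi|hi] := eqVneq (size (phi (S i))) (e i).+1; first by left.
  have [hj|hj] := eqVneq (size (phi (S j))) (e j).+1; first by right.
  exfalso; apply: (@def_transfer (S i) (S j) (e i) (e j)) => //.
  + exact: hcop.
  + by move: (hs i) hi; rewrite leq_eqVlt => /orP [/eqP ->|]; rewrite ?eqxx.
  + by move: (hs j) hj; rewrite leq_eqVlt => /orP [/eqP ->|]; rewrite ?eqxx.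
have hcop' : forall i j, i != j -> coprimep (phi (S i)) (phi (S j)).
  by move=> i j ne; apply: (@cop_transfer _ _ (e i) (e j)) => //; apply: hcop.
have sP : (size (phi P) <= d)%N by have := phi_size hP; rewrite prednK.
have [c [sc ec]] := @Ugen _ k (fun i => phi (S i)) e (fun i => phi_nz (hnz i) (hhom i)) hs hcop' hdef _ sP.
exists (fun i => Hn (e i).-1 (c i)); split.
  move=> i; have [e0|epos] := posnP (e i).
    by move: (sc i); rewrite e0 size_poly_leq0 => /eqP ->; rewrite Hn0 msize0.
  by apply: leq_trans (@homog_msize _ _ _ (Hn_homog _ _ _)) _; rewrite prednK.
rewrite -(Hn_phi hP) ec Hn_sum; apply: eq_bigr => i _.
rewrite -rmorph_prod.
have hT := @homog_prod_cond k S e (fun j => j != i) hhom.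
have [e0|epos] := posnP (e i).
  by move: (sc i); rewrite e0 size_poly_leq0 => /eqP ->; rewrite Hn0 !mul0r Hn0.
have -> : d.-1 = ((e i).-1 + \sum_(j < k | j != i) e j)%N.
  by rewrite /d (sum_split e i); move: epos; nlia.
rewrite Hn_mul ?(Hn_phi hT) //; first by rewrite prednK.
exact: phi_size hT.
Qed.

End P.
Arguments phi_nz {K n P}.

Theorem mainTheorem10 (K : fieldType) (d1 d2 : K -> K)
    (hd1 : is_derivation d1) (hd2 : is_derivation d2)
    (hcomm : forall a, d1 (d2 a) = d2 (d1 a))
    (k : nat) (S : 'I_k -> {mpoly K[2]})
    (L : {mpoly K[2]}) (d : nat)
    (hord : msize L = d.+1)   (* L <> 0 and ord L = d *)
    (hhom : forall i, exists e, S i \is e.-homog)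
    (hcop : forall i j, i != j -> mcoprime (S i) (S j))
    (hsym : Sym L = \prod_(i < k) S i) :
  (forall P : {mpoly K[2]}, (0 < d)%N -> P \is (d.-1).-homog ->
     in_ideal (fun i : 'I_k => \prod_(j < k | j != i) S j) P)
  /\
  (forall R : {mpoly K[2]}, common_obstacle d1 d2 S L R ->
     R = 0 \/ ((msize R).-1 + 2 <= d)%N).
Proof.
have hLS : (msize (L - Sym L) <= d)%N by have := @msize_subSym K L; rewrite hord.
have Symnz : Sym L != 0.
  apply/eqP => h; move: hLS; rewrite h subr0 hord ltnn //.
have SymH : Sym L \is d.-homog by have := @Sym_homog K L; rewrite hord.
have hSnz : forall i, S i != 0.
  by move=> i0; apply/eqP => h; move: Symnz; rewrite hsym (bigD1 i0) //= h mul0r eqxx.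
set e := fun i => (msize (S i)).-1.
have hhom' : forall i, S i \is (e i).-homog.
  by move=> i; have [e' he'] := hhom i; apply: dhomog_msize he'.
have hmsz : forall i, msize (S i) = (e i).+1.
  by move=> i; apply: (@homog_msizeE K); [apply: hSnz | apply: hhom'].
have hsum : (\sum_(i < k) e i)%N = d.
  have h1 := @homog_prod_cond K k S e xpredT hhom'.
  rewrite -hsym in h1; exact: dhomog_uniq Symnz h1 SymH.
split.
  move=> P dpos hP.
  have [G [_ eG]] := @part1 K k S hSnz hhom' hcop P ltac:(by rewrite -/e hsum) ltac:(by rewrite -/e hsum).
  by exists G.
move=> R [hfact hmin].
suff [R' [hf' hR']] : exists R', has_factorization d1 d2 S (L - R') /\ (msize R' <= d.-1)%N.
  have := hmin R' hf'; rewrite /ord_le => hRR.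
  have [R0|Rpos] := posnP (msize R).
    by left; apply: (@msize_eq0 K); rewrite R0.
  by right; move: hRR hR' Rpos; nlia.
set H := L - Cf K d1 d2 k S.
have hC2 := @fold_C2 K d1 d2 k S e hmsz.
rewrite hsum in hC2.
have hH : (msize H <= d)%N.
  have -> : H = (L - Sym L) - (Cf K d1 d2 k S - \prod_(i < k) S i) by rewrite hsym /H; ring.
  exact: msizeB_le.
have [hsmall|hbig] := leqP (msize H) d.-1.
  exists H; split => //; exists S; split.
    by move=> i; have := @Sym_add K (S i) 0 (e i) (hSnz i) (hhom' i); rewrite addr0 msize0; apply.
  by rewrite /H subKr.
have hHd : msize H = d by move: hH hbig; nlia.
have dpos : (0 < d)%N by move: hbig; nlia.
have hPh : Sym H \is (d.-1).-homog by have := @Sym_homog K H; rewrite hHd.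
have [G [sG eG]] := @part1 K k S hSnz hhom' hcop (Sym H) ltac:(by rewrite -/e hsum) ltac:(by rewrite -/e hsum).
set F := fun i => S i + G i.
have hFS : forall i, F i - S i = G i by move=> i; rewrite /F addrC addKr.
have hC1 := @fold_C1 K d1 d2 hd1 hd2 k S F e hmsz (fun i => ltac:(by rewrite hFS; apply: sG)).
rewrite hsum in hC1.
exists (L - Cf K d1 d2 k F); split.
  exists F; split.
    by move=> i; rewrite /F (@Sym_add K _ _ _ (hSnz i) (hhom' i)) //; apply: sG.
  by rewrite subKr.
have -> : L - Cf K d1 d2 k F = (H - Sym H) - (Cf K d1 d2 k F - Cf K d1 d2 k S - \sum_(i < k) (F i - S i) * Tm S i).
  have -> : \sum_(i < k) (F i - S i) * Tm S i = Sym H.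
    by rewrite eG; apply: eq_bigr => i _; rewrite hFS.
  rewrite /H; ring.
apply: msizeB_le => //.
by have := @msize_subSym K H; rewrite hHd.
Qed.
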